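(* Let $\ell:\mathbb R\times\{-1,+1\}\to\mathbb R$ be convex and twice differentiable in its first argument. Suppose $0\le\alpha<1$, $\max\{e_{+1},e_{-1}\}<0.5$, $\ell''(t,y)=\ell''(t,-y)$ for all $t\in\mathbb R$ and $y\in\{-1,+1\}$, and $\alpha(1-2p)(1-e_{+1}-e_{-1})=(1-\alpha)(e_{+1}-e_{-1})$. Then the map $f\mapsto R_{\ell_{\alpha\text{-peer}},\tilde{\mathcal D}}(f)$ is convex, i.e. for all measurable $f,g:\mathcal X\to\mathbb R$ (with finite risks) and $\lambda\in[0,1]$, $R_{\ell_{\alpha\text{-peer}},\tilde{\mathcal D}}(\lambda f+(1-\lambda)g)\le\lambda R_{\ell_{\alpha\text{-peer}},\tilde{\mathcal D}}(f)+(1-\lambda)R_{\ell_{\alpha\text{-peer}},\tilde{\mathcal D}}(g)$.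
   Context: Let $\mathcal X\subseteq\mathbb R^d$ and let $(X,Y)$ be a random pair with distribution $\mathcal D$ on $\mathcal X\times\{-1,+1\}$, with $p:=\mathbb P(Y=+1)\in(0,1)$. A noisy label $\tilde Y\in\{-1,+1\}$ is generated with noise rates $e_{+1}:=\mathbb P(\tilde Y=-1\mid Y=+1)$, $e_{-1}:=\mathbb P(\tilde Y=+1\mid Y=-1)$, $e_{-1}+e_{+1}<1$, and $\tilde Y$ is conditionally independent of $X$ given $Y$; $\tilde{\mathcal D}$ is the distribution of $(X,\tilde Y)$. For a weight $\alpha$, $$R_{\ell_{\alpha\text{-peer}},\tilde{\mathcal D}}(f):=\mathbb E[\ell(f(X),\tilde Y)]-\alpha\,\mathbb E[\ell(f(X_1),\tilde Y_2)],$$ with $(X,\tilde Y),(X_1,\tilde Y_1),(X_2,\tilde Y_2)$ i.i.d. from $\tilde{\mathcal D}$. *)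

(* Defs.v *)
From HB Require Import structures.
From mathcomp Require Import all_boot all_order all_algebra.
From mathcomp Require Import all_classical all_reals all_analysis.
Set Implicit Arguments. Unset Strict Implicit. Unset Printing Implicit Defensive.
Import Order.TTheory GRing.Theory Num.Theory.
Local Open Scope classical_set_scope.
Local Open Scope ring_scope.

(* Labels {-1,+1} are encoded as bool: true = +1, false = -1; the label -y
   is ~~ y. *)

Section defs.
Context (R : realType) (dO : measure_display) (Omega : measurableType dO)
  (P : probability Omega R).

Definition prob_pos (Y : Omega -> bool) : R := fine (P [set w | Y w]).

Definition noise_pos (Y Yt : Omega -> bool) : R :=
  fine (P [set w | Y w /\ ~~ Yt w]) / prob_pos Y.

Definition noise_neg (Y Yt : Omega -> bool) : R :=
  fine (P [set w | ~~ Y w /\ Yt w]) / (1 - prob_pos Y).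

Definition cond_indep_given {dX} {TX : measurableType dX}
    (X : Omega -> TX) (Y Yt : Omega -> bool) : Prop :=
  forall (A : set TX) (b c : bool), measurable A ->
    (P [set w | X w \in A /\ Yt w = b /\ Y w = c] * P [set w | Y w = c] =
     P [set w | X w \in A /\ Y w = c] * P [set w | Yt w = b /\ Y w = c])%E.

(* alpha-peer risk under the noisy distribution:
   E[l(f(X), Yt)] - alpha * E[l(f(X_1), Yt_2)],
   where (X_1,Yt_1), (X_2,Yt_2) are independent copies, realised on the
   product space (Omega * Omega, P \x P). *)
Definition peer_risk {dX} {TX : measurableType dX}
    (X : Omega -> TX) (Yt : Omega -> bool) (l : R -> bool -> R) (alpha : R)
    (f : TX -> R) : R :=
  Rintegral P setT (fun w => l (f (X w)) (Yt w))
  - alpha * Rintegral (P \x P)%E setT (fun w => l (f (X w.1)) (Yt w.2)).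

Definition finite_peer_risk {dX} {TX : measurableType dX}
    (X : Omega -> TX) (Yt : Omega -> bool) (l : R -> bool -> R)
    (f : TX -> R) : Prop :=
  P.-integrable setT (fun w => (l (f (X w)) (Yt w))%:E) /\
  (P \x P)%E.-integrable setT (fun w => (l (f (X w.1)) (Yt w.2))%:E).

End defs.

(* Main.v *)
Require Import Defs.
From HB Require Import structures.
From mathcomp Require Import all_boot all_order all_algebra.
From mathcomp Require Import all_classical all_reals all_analysis.
From mathcomp Require Import lra ring.
Import Order.TTheory GRing.Theory Num.Theory.
Local Open Scope classical_set_scope.
Local Open Scope ring_scope.

Lemma affine_diff (R : realType) (l : R -> bool -> R) :
  (forall y (t : R), derivable (l^~ y) t 1 /\ derivable (derive1 (l^~ y)) t 1) ->
  (forall y (t : R), derive1 (derive1 (l^~ y)) t = derive1 (derive1 (l^~ (~~ y))) t) ->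
  exists a b : R, forall t, l t true - l t false = a * t + b.
Proof.
move=> hd hs.
pose D1 := fun t => derive1 (l^~ true) t - derive1 (l^~ false) t.
have dD1 : forall t, is_derive t (1:R) D1 0.
  move=> t; have [_ h1] := hd true t; have [_ h2] := hd false t.
  have := @is_deriveB _ _ _ _ _ t 1 _ _ (derivableP h1) (derivableP h2).
  by rewrite -!derive1E (hs true t) subrr.
pose a := D1 0.
pose G := fun t => l t true - l t false - a * t.
have dG : forall t, is_derive t (1:R) G 0.
  move=> t; have [h1 _] := hd true t; have [h2 _] := hd false t.
  have H1 := @is_deriveB _ _ _ _ _ t 1 _ _ (derivableP h1) (derivableP h2).
  have H3 : is_derive t (1:R) (fun t => a * t) a.
    have := @is_deriveZ R R R id a t 1 1 (is_derive_id t 1).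
    by rewrite /GRing.scale /= mulr1.
  have H := @is_deriveB _ _ _ _ _ t 1 _ _ H1 H3.
  have -> : 0 = 'D_1 (l^~ true) t - 'D_1 (l^~ false) t - a.
    by rewrite /a -!derive1E -(is_derive_0_is_cst t 0 dD1) /D1 subrr.
  exact: H.
exists a, (G 0) => t.
rewrite -(is_derive_0_is_cst t 0 dG) /G; lra.
Qed.

Lemma Rint_comb d (T : measurableType d) (R : realType)
  (mu : {measure set T -> \bar R}) (F G H : T -> R) (s t : R) :
  mu.-integrable setT (EFin \o F) -> mu.-integrable setT (EFin \o G) ->
  mu.-integrable setT (EFin \o H) ->
  Rintegral mu setT (fun w => F w - s * G w - t * H w) =
    Rintegral mu setT F - s * Rintegral mu setT G - t * Rintegral mu setT H
  /\ mu.-integrable setT (EFin \o (fun w => F w - s * G w - t * H w)).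
Proof.
move=> iF iG iH.
have iZ : forall (K : T -> R) (r : R), mu.-integrable setT (EFin \o K) ->
    mu.-integrable setT (EFin \o (fun w => r * K w)).
  move=> K r iK; apply: eq_integrable (integrableZl measurableT r iK) => // w _.
have iB : forall (K L : T -> R), mu.-integrable setT (EFin \o K) ->
    mu.-integrable setT (EFin \o L) ->
    mu.-integrable setT (EFin \o (fun w => K w - L w)).
  move=> K L iK iL; apply: eq_integrable (integrableB measurableT iK iL) => // w _.
have i1 := iB _ _ iF (iZ _ s iG).
split; last exact: iB _ _ i1 (iZ _ t iH).
rewrite RintegralB //; last exact: iZ.
rewrite RintegralB //; last exact: iZ.
by rewrite !RintegralZl.
Qed.

Lemma Rint_fst d (T : measurableType d) (R : realType)
  (P : probability T R) (D : T -> R) :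
  (P \x P)%E.-integrable setT (EFin \o (fun w => D w.1)) ->
  Rintegral (P \x P)%E setT (fun w => D w.1) = Rintegral P setT D.
Proof.
move=> i; rewrite /Rintegral -(integral12_prod_meas1 i); congr fine.
apply: eq_integral => x _; rewrite /fubini_F /=.
rewrite (integral_cst P measurableT (D x)%:E). by rewrite [X in (_ * X)%E](_ : _ = 1%E) ?mule1 //; exact: probability_setT.
Qed.
Theorem lemma4 (R : realType) (dO : measure_display) (Omega : measurableType dO)
  (P : probability Omega R) (d : nat) (calX : set (d.-tuple R))
  (X : Omega -> d.-tuple R) (Y Yt : Omega -> bool)
  (l : R -> bool -> R) (alpha : R) :
  (* the random pair and the noisy label *)
  measurable calX -> measurable_fun setT X ->
  (forall w, calX (X w)) ->
  measurable [set w | Y w] -> measurable [set w | Yt w] ->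
  0 < prob_pos P Y < 1 ->
  cond_indep_given P X Y Yt ->
  noise_neg P Y Yt + noise_pos P Y Yt < 1 ->
  (* the loss: convex and twice differentiable in its first argument *)
  (forall y (a b t : R), 0 <= t <= 1 ->
     l (t * a + (1 - t) * b) y <= t * l a y + (1 - t) * l b y) ->
  (forall y (t : R), derivable (l^~ y) t 1 /\ derivable (derive1 (l^~ y)) t 1) ->
  (* hypotheses of the lemma *)
  0 <= alpha < 1 ->
  Num.max (noise_pos P Y Yt) (noise_neg P Y Yt) < 2^-1 ->
  (forall y (t : R), derive1 (derive1 (l^~ y)) t = derive1 (derive1 (l^~ (~~ y))) t) ->
  alpha * (1 - 2 * prob_pos P Y) * (1 - noise_pos P Y Yt - noise_neg P Y Yt)
    = (1 - alpha) * (noise_pos P Y Yt - noise_neg P Y Yt) ->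
  (* conclusion: convexity of f |-> peer risk *)
  forall (f g : d.-tuple R -> R) (lam : R),
    measurable_fun calX f -> measurable_fun calX g ->
    0 <= lam <= 1 ->
    finite_peer_risk P X Yt l f -> finite_peer_risk P X Yt l g ->
    finite_peer_risk P X Yt l (fun x => lam * f x + (1 - lam) * g x) ->
    peer_risk P X Yt l alpha (fun x => lam * f x + (1 - lam) * g x)
      <= lam * peer_risk P X Yt l alpha f + (1 - lam) * peer_risk P X Yt l alpha g.
Proof.
move=> _ _ _ _ _ _ _ _ convl hd ha _ hs _ f g lam _ _ hlam [i1f i2f] [i1g i2g] [i1c i2c].
have [a [b hab]] := @affine_diff R l hd hs.
have E : forall t, l t true = l t false + (a * t + b).
  by move=> t; rewrite -hab addrC subrK.
set c := fun x => lam * f x + (1 - lam) * g x.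
pose Dl := fun w => l (c (X w)) false - lam * l (f (X w)) false
                    - (1 - lam) * l (g (X w)) false.
have key : forall u v y, l (lam * u + (1 - lam) * v) y - lam * l u y - (1 - lam) * l v y
   = l (lam * u + (1 - lam) * v) false - lam * l u false - (1 - lam) * l v false.
  by move=> u v [] //; rewrite !E; ring.
have [e1 _] := @Rint_comb _ _ _ _ _ _ _ lam (1 - lam) i1c i1f i1g.
have [e2 i2] := @Rint_comb _ _ _ _ _ _ _ lam (1 - lam) i2c i2f i2g.
have h1 : Rintegral P setT (fun w => l (c (X w)) (Yt w))
   - lam * Rintegral P setT (fun w => l (f (X w)) (Yt w))
   - (1 - lam) * Rintegral P setT (fun w => l (g (X w)) (Yt w)) = Rintegral P setT Dl.
  by rewrite -e1; apply: eq_Rintegral => w _; rewrite /Dl /c key.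
have i2' : (P \x P)%E.-integrable setT (EFin \o (fun w => Dl w.1)).
  by apply: eq_integrable i2 => // w _; rewrite /= /Dl /c key.
have h2 : Rintegral (P \x P)%E setT (fun w => l (c (X w.1)) (Yt w.2))
   - lam * Rintegral (P \x P)%E setT (fun w => l (f (X w.1)) (Yt w.2))
   - (1 - lam) * Rintegral (P \x P)%E setT (fun w => l (g (X w.1)) (Yt w.2))
   = Rintegral P setT Dl.
  rewrite -e2 -(@Rint_fst _ _ _ _ _ i2'); apply: eq_Rintegral => w _.
  by rewrite /Dl /c key.
have hD : Rintegral P setT Dl <= 0.
  have : 0 <= Rintegral P setT (fun w => - Dl w).
    apply: Rintegral_ge0 => w _; rewrite /Dl /c.
    have := convl false (f (X w)) (g (X w)) lam hlam; lra.
  rewrite (_ : (fun w => - Dl w) = (fun w => -1 * Dl w)); last first.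
    by apply: funext => w; rewrite mulN1r.
  rewrite RintegralZl //; first by rewrite mulN1r oppr_ge0.
  have [_ i1] := @Rint_comb _ _ _ _ _ _ _ lam (1 - lam) i1c i1f i1g.
  by apply: eq_integrable i1 => // w _; rewrite /= /Dl /c key.
rewrite /peer_risk -/c.
move: h1 h2 hD ha.
set Ic := Rintegral P _ _. set If := Rintegral P _ (fun w => l (f (X w)) (Yt w)).
set Ig := Rintegral P _ (fun w => l (g (X w)) (Yt w)).
set Jc := Rintegral _ _ (fun w => l (c (X w.1)) (Yt w.2)).
set Jf := Rintegral _ _ (fun w => l (f (X w.1)) (Yt w.2)).
set Jg := Rintegral _ _ (fun w => l (g (X w.1)) (Yt w.2)).
set Dv := Rintegral P setT Dl.
move=> h1 h2 hD /andP[a0 a1].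
have : 0 <= (1 - alpha) * (- Dv) by apply: mulr_ge0; lra.
nra.
Qed.
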